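(* Let $b \geq 2$ be an integer and let $r$ be an integer with $1 \leq r \leq b$. Let $n_1, n_2, \dots, n_r$ be integers such that $0 \leq n_1 \leq n_2 \leq \dots \leq n_r$. Then $$ \sum_{1 \leq i \leq r} S_b(n_i) + \sum_{1 \leq i \leq r-1} (r-i)\, n_i \leq S_b\left(\sum_{1 \leq i \leq r} n_i\right). $$
   Context: For an integer $b \geq 2$ and a nonnegative integer $n$, $s_b(n)$ denotes the sum of the digits in the base-$b$ expansion of $n$, and $S_b(n) := \sum_{1 \leq j \leq n-1} s_b(j)$ (an empty sum being $0$, so $S_b(0)=S_b(1)=0$). *)

(* Defs.v *)
From mathcomp Require Import all_boot.
Set Implicit Arguments. Unset Strict Implicit. Unset Printing Implicit Defensive.

(* Sum of base-b digits of n, computed with fuel n (enough since each step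
   divides n by b >= 2; for b <= 1 the value is irrelevant). *)
Fixpoint sdigits_fuel (fuel b n : nat) : nat :=
  match fuel with
  | 0 => 0
  | fuel'.+1 => if n == 0 then 0 else n %% b + sdigits_fuel fuel' b (n %/ b)
  end.

Definition s_b (b n : nat) : nat := sdigits_fuel n b n.

Definition S_b (b n : nat) : nat := \sum_(1 <= j < n) s_b b j.

Lemma s_b_test : [seq s_b 10 k | k <- [:: 0; 9; 10; 123; 999]] = [:: 0; 9; 1; 6; 27].
Proof. by []. Qed.
Lemma s_b_test2 : [seq s_b 2 k | k <- [:: 7; 8; 13]] = [:: 3; 1; 3].
Proof. by []. Qed.

(* Main.v *)
Require Import Defs.
From mathcomp Require Import all_boot zify.
Set Implicit Arguments. Unset Strict Implicit. Unset Printing Implicit Defensive.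

Lemma fuel_eq b f1 f2 n : 1 < b -> n <= f1 -> n <= f2 ->
  sdigits_fuel f1 b n = sdigits_fuel f2 b n.
Proof.
move=> hb; elim: f1 f2 n => [|f IH] f2 n h1 h2.
  have -> : n = 0 by lia.
  by case: f2 h2.
case: f2 h2 => [|g] h2.
  have -> : n = 0 by lia.
  by [].
rewrite /=; case: eqP => // /eqP hn.
have hlt : n %/ b < n by apply: ltn_Pdiv; lia.
by rewrite (IH g) //; lia.
Qed.

Lemma s_rec b n : 1 < b -> 0 < n -> s_b b n = n %% b + s_b b (n %/ b).
Proof.
move=> hb hn; rewrite /s_b; case: n hn => [//|m] _ /=.
have hlt : m.+1 %/ b < m.+1 by apply: ltn_Pdiv.
by rewrite (@fuel_eq b m (m.+1 %/ b)) //; lia.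
Qed.

Lemma s0 b : s_b b 0 = 0.
Proof. by []. Qed.

Lemma s_digit b q d : 1 < b -> d < b -> s_b b (q * b + d) = s_b b q + d.
Proof.
move=> hb hd.
case: (posnP (q * b + d)) => h.
  have -> : q = 0 by nia.
  have -> : d = 0 by lia.
  by [].
rewrite s_rec // modnMDl modn_small // divnMDl; last lia.
by rewrite divn_small // addn0 addnC.
Qed.

Lemma s_le_succ b x : 1 < b -> s_b b x.+1 <= (s_b b x).+1.
Proof.
move=> hb; elim/ltn_ind: x => x IH.
rewrite {1 2}(divn_eq x b).
have hd : x %% b < b by rewrite ltn_mod; lia.
case: (ltnP (x %% b).+1 b) => h.
  by rewrite -addnS !s_digit // addnS.
have e : x %% b = b.-1 by lia.
have -> : (x %/ b * b + x %% b).+1 = (x %/ b).+1 * b + 0 by rewrite e; lia.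
rewrite !s_digit //; last lia.
have hx : 0 < x by have := leq_mod x b; lia.
have := IH (x %/ b) (ltn_Pdiv hb hx); lia.
Qed.

Lemma s_le_add b x t : 1 < b -> s_b b (x + t) <= s_b b x + t.
Proof.
move=> hb; elim: t => [|t IH]; first by rewrite !addn0.
rewrite addnS; have := s_le_succ (x + t) hb; lia.
Qed.

Lemma S_succ b n : S_b b n.+1 = S_b b n + s_b b n.
Proof.
rewrite /S_b; case: n => [|n]; first by rewrite !big_geq.
by rewrite big_nat_recr.
Qed.

Lemma S0 b : S_b b 0 = 0.
Proof. by rewrite /S_b big_geq. Qed.

Lemma C2S n : 'C(n.+1, 2) = 'C(n, 2) + n.
Proof. by rewrite binS bin1. Qed.

Lemma SR b q v : 1 < b -> v <= b ->
  S_b b (q * b + v) = b * S_b b q + q * 'C(b, 2) + v * s_b b q + 'C(v, 2).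
Proof.
move=> hb; elim: q v => [|q IHq] v.
  elim: v => [|v IHv] hv; first by rewrite mul0n add0n S0 muln0 !mul0n.
  rewrite mul0n add0n S_succ.
  have := IHv (ltnW hv); rewrite mul0n add0n => ->.
  have := @s_digit b 0 v hb hv; rewrite mul0n add0n => ->.
  rewrite S0 s0 C2S; lia.
elim: v => [|v IHv] hv.
  have -> : q.+1 * b + 0 = q * b + b by rewrite addn0 mulSn addnC.
  rewrite IHq // S_succ mul0n addn0 mulnDr mulSn (_ : 'C(0,2) = 0) //; lia.
have hv' : v < b by lia.
rewrite addnS S_succ IHv; last lia.
rewrite s_digit // C2S mulSn; lia.
Qed.

Definition g m D := m * 'C(D %/ m, 2) + (D %/ m) * 'C(m, 2) + (D %/ m) * (D %% m) + 'C(D %% m, 2).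

Lemma C2D a b : 'C(a + b, 2) = 'C(a, 2) + 'C(b, 2) + a * b.
Proof.
elim: b => [|b IH]; first by rewrite addn0 muln0 addn0 (_ : 'C(0,2) = 0) // addn0.
by rewrite addnS !C2S IH mulnS; lia.
Qed.

Lemma divmodE m u v : v < m -> (u * m + v) %/ m = u /\ (u * m + v) %% m = v.
Proof.
move=> h; split; first by rewrite divnMDl ?divn_small ?addn0 //; lia.
by rewrite modnMDl modn_small.
Qed.

Lemma g_add m D : 0 < m -> g m (D + m) = g m D + D + 'C(m, 2).
Proof.
move=> hm; have hv : D %% m < m by rewrite ltn_mod.
rewrite /g (divn_eq D m); move: (D %/ m) (D %% m) hv => u v hv.
have -> : u * m + v + m = u.+1 * m + v by rewrite mulSn; lia.
have [-> ->] := divmodE u.+1 hv.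
have [-> ->] := divmodE u hv.
rewrite C2S !mulnDr !mulSn (mulnC m u); lia.
Qed.

Lemma g_mono m D : D <= m * m -> g m D <= g m.+1 D.
Proof.
case: m => [|m]; first by rewrite muln0 leqn0 => /eqP ->.
move=> hD; rewrite /g.
have hv' : D %% m.+2 < m.+2 by rewrite ltn_mod.
have hDe := divn_eq D m.+2.
move: (D %/ m.+2) (D %% m.+2) hv' hDe => u' v' hv' hDe.
have hu' : u' <= m.
  rewrite leqNgt; apply/negP => hlt.
  have : m.+1 * m.+2 <= u' * m.+2 by rewrite leq_mul2r hlt orbT.
  nia.
rewrite hDe.
have eN : 'C(m.+2, 2) = 'C(m.+1, 2) + m.+1 by rewrite C2S.
case: (ltnP (u' + v') m.+1) => h.
  have -> : u' * m.+2 + v' = u' * m.+1 + (u' + v') by rewrite mulnS; lia.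
  have [-> ->] := divmodE u' h.
  have hk : u' * (u' + v') <= u' * m.+1 by rewrite leq_mul2l; lia.
  rewrite C2D eN; lia.
set w := u' + v' - m.+1.
have h2 : w < m.+1 by rewrite /w; lia.
have hvw : v' = w + m.+1 - u' by rewrite /w; lia.
have -> : u' * m.+2 + v' = u'.+1 * m.+1 + w by rewrite /w !mulSn mulnS; lia.
have [-> ->] := divmodE u'.+1 h2.
have hk : w * u'.+1 <= w * m.+1 by rewrite leq_mul2l; lia.
have hC : 'C(u', 2) + u' * v' + 'C(v', 2) = 'C(w, 2) + 'C(m.+1, 2) + w * m.+1.
  have e1 := C2D u' v'; have e2 := C2D w m.+1.
  have e3 : u' + v' = w + m.+1 by rewrite /w; lia.
  rewrite e3 e2 in e1; lia.
rewrite (C2S u') eN; lia.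
Qed.

Definition rowsum H (s : seq nat) := \sum_(e < H) 'C(\sum_(x <- s) (e < x), 2).
Definition colsum (s : seq nat) := \sum_(x <- s) 'C(x, 2).
Definition tot (s : seq nat) := \sum_(x <- s) x.

Lemma sum_lt_ord x H : \sum_(e < H) (e < x) = minn x H.
Proof.
elim: H => [|H IH]; first by rewrite big_ord0 minn0.
rewrite big_ord_recr /= IH; case: ltnP => h /=; lia.
Qed.

Lemma rowsum_cons_max H s : all (fun x => x <= H) s ->
  rowsum H (H :: s) = rowsum H s + tot s.
Proof.
move=> /allP hs; rewrite /rowsum /tot.
rewrite (eq_bigr (fun e : 'I_H => 'C(\sum_(x <- s) (e < x), 2) + \sum_(x <- s) (e < x))); last first.
  by move=> e _; rewrite big_cons ltn_ord add1n C2S.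
rewrite big_split /=; congr (_ + _).
rewrite exchange_big /=; apply: eq_big_seq => x /hs hx.
by rewrite sum_lt_ord; apply/minn_idPl.
Qed.

Lemma rowsum_last H s : all (fun x => x <= H) s -> rowsum H.+1 s = rowsum H s.
Proof.
move=> /allP hs; rewrite /rowsum big_ord_recr /=.
rewrite (_ : \sum_(x <- s) (H < x) = 0) ?addn0 //.
by rewrite big1_seq // => x /andP [_ /hs hx]; rewrite ltnNge hx.
Qed.

Lemma ltn_pred e x : (e.+1 < x) = (e < x.-1).
Proof. by case: x. Qed.

Lemma rowsum_peel H s :
  rowsum H.+1 s = 'C(\sum_(x <- s) (0 < x), 2) + rowsum H (map predn s).
Proof.
rewrite /rowsum big_ord_recl; congr (_ + _); apply: eq_bigr => e _.
by rewrite lift0 big_map; congr 'C(_, 2); apply: eq_bigr => x _; rewrite ltn_pred.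
Qed.

Lemma colsum_peel s : colsum s = colsum (map predn s) + tot (map predn s).
Proof.
rewrite /colsum /tot !big_map -big_split /=; apply: eq_bigr => x _.
by case: x => [//|x]; rewrite C2S.
Qed.

Lemma tot_peel s : all (fun x => 0 < x) s -> tot s = size s + tot (map predn s).
Proof.
move=> /allP hs; rewrite /tot big_map -sum1_size -big_split /=.
by apply: eq_big_seq => x /hs; case: x.
Qed.

Lemma count_pos s : all (fun x => 0 < x) s -> \sum_(x <- s) (0 < x) = size s.
Proof.
move=> /allP hs; rewrite -sum1_size; apply: eq_big_seq => x /hs ->; by [].
Qed.

Lemma sum_filter_pos (F : nat -> nat) s : F 0 = 0 ->
  \sum_(x <- filter (fun x => 0 < x) s) F x = \sum_(x <- s) F x.
Proof.
move=> h0; rewrite big_filter big_mkcond /=; apply: eq_bigr => x _.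
by case: x.
Qed.

Lemma tot_bound c s : all (fun x => x <= c) s -> tot s <= size s * c.
Proof.
rewrite /tot; elim: s => [|x s IH] /=; first by rewrite big_nil.
move=> /andP [hx hs]; rewrite big_cons mulSn; have := IH hs; lia.
Qed.

Lemma perm_rct H s s' : perm_eq s s' ->
  [/\ rowsum H s = rowsum H s', colsum s = colsum s' & tot s = tot s'].
Proof.
move=> hp; split; rewrite /rowsum /colsum /tot ?(perm_big _ hp) //.
by apply: eq_bigr => e _; rewrite (perm_big _ hp).
Qed.

Lemma rc_nil H : rowsum H [::] + colsum [::] = 0.
Proof.
rewrite /rowsum /colsum big_nil addn0 big1 // => e _; by rewrite big_nil.
Qed.

Lemma rc_H0 s : all (fun x => x <= 0) s -> rowsum 0 s + colsum s = 0.
Proof.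
move=> /allP hs; rewrite /rowsum /colsum big_ord0 add0n big1_seq // => x /andP [_ /hs].
by rewrite leqn0 => /eqP ->.
Qed.

Lemma lemR k : forall T H s, T + H <= k -> size s <= T -> all (fun x => x <= H) s ->
  rowsum H s + colsum s <= g (maxn T H) (tot s).
Proof.
elim: k => [|k IH] T H s hk hs ha.
  have hT : T = 0 by lia.
  have hH : H = 0 by lia.
  by rewrite hH rc_H0 // -hH.
case: T hk hs => [|T'] hk hs.
  by case: s hs ha => // _ _; rewrite rc_nil.
case: H hk ha => [|H'] hk ha; first by rewrite rc_H0.
case: (leqP T'.+1 H'.+1) => hTH.
  case: (boolP (H'.+1 \in s)) => hin.
    have hp := perm_to_rem hin.
    set s' := rem H'.+1 s in hp.
    have [-> -> ->] := perm_rct H'.+1 hp.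
    have ha' : all (fun x => x <= H'.+1) s'.
      by apply/allP => x /mem_rem hx; move/allP: ha; apply.
    have hs' : size s' <= T' by rewrite /s' size_rem //; case: (size s) hs => //= n; lia.
    rewrite (rowsum_cons_max ha') /colsum /tot !big_cons -/(colsum s') -/(tot s').
    have := IH T' H'.+1 s' ltac:(lia) hs' ha'.
    rewrite (maxn_idPr (ltnW hTH)).
    rewrite [H'.+1 + _]addnC g_add //; lia.
  have ha' : all (fun x => x <= H') s.
    apply/allP => x hx; move/allP: ha => /(_ x hx); rewrite leq_eqVlt => /orP [/eqP e|//].
    by rewrite -e hx in hin.
  rewrite rowsum_last //.
  have := IH T'.+1 H' s ltac:(lia) hs ha'.
  case: (ltnP T' H') => h2.
    rewrite (_ : maxn T'.+1 H' = H'); last by apply/maxn_idPr.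
    move=> h; apply: (leq_trans h); apply: g_mono.
    have := tot_bound ha'; have : size s * H' <= H' * H' by rewrite leq_mul2r; lia.
    lia.
  have e : T' = H' by lia.
  rewrite e (_ : maxn H'.+1 H' = H'.+1) //; apply/maxn_idPl; lia.
case: (boolP ((size s == T'.+1) && all (fun x => 0 < x) s)).
  move=> /andP [/eqP hsz hpos].
  rewrite rowsum_peel colsum_peel (tot_peel hpos) (count_pos hpos) hsz.
  have ha' : all (fun x => x <= H') (map predn s).
    rewrite all_map; apply/allP => x hx; move/allP: ha => /(_ x hx) /=; lia.
  have := IH T'.+1 H' (map predn s) ltac:(lia) ltac:(by rewrite size_map hsz) ha'.
  rewrite (_ : maxn T'.+1 H' = T'.+1); last by apply/maxn_idPl; lia.
  rewrite [T'.+1 + _]addnC g_add //; lia.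
move=> hn.
set s' := filter (fun x => 0 < x) s.
have hs' : size s' <= T'.
  rewrite size_filter.
  case/nandP: hn => hn.
    have := count_size (fun x => 0 < x) s; lia.
  have : count (fun x => 0 < x) s != size s by rewrite -all_count.
  have := count_size (fun x => 0 < x) s; lia.
have ha' : all (fun x => x <= H'.+1) s' by rewrite all_filter; apply: sub_all ha => x hx /=; rewrite hx implybT.
have hr : rowsum H'.+1 s' = rowsum H'.+1 s.
  by apply: eq_bigr => e _; rewrite sum_filter_pos.
have hc : colsum s' = colsum s by rewrite /colsum sum_filter_pos.
have ht : tot s' = tot s by rewrite /tot sum_filter_pos.
rewrite -hr -hc -ht.
have := IH T' H'.+1 s' ltac:(lia) hs' ha'.
rewrite (_ : maxn T' H'.+1 = T'); last by apply/maxn_idPl; lia.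
move=> h; apply: (leq_trans h); apply: g_mono.
have := tot_bound ha'; have : size s' * H'.+1 <= T' * T' by apply: leq_mul; lia.
lia.
Qed.

Lemma NB b Q (ds : seq nat) : 1 < b -> size ds <= b -> all (fun x => x < b) ds ->
  \sum_(e < b) S_b b (Q + \sum_(x <- ds) (e < x)) + Q * 'C(b, 2) + colsum ds
    <= S_b b (Q * b + tot ds).
Proof.
move=> hb hs ha.
set a := s_b b Q.
pose Dd t := a + t - s_b b (Q + t).
pose phi x := \sum_(t < x) Dd t.
have sle : forall t, s_b b (Q + t) <= a + t by move=> t; apply: s_le_add.
have F1 : forall x, S_b b (Q + x) + phi x = S_b b Q + x * a + 'C(x, 2).
  elim=> [|x IH]; first by rewrite addn0 /phi big_ord0 (_ : 'C(0,2) = 0) //; lia.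
  rewrite addnS S_succ /phi big_ord_recr /= -/(phi x) C2S mulSn.
  have := sle x; rewrite /Dd; lia.
have Dinc : forall t, Dd t <= Dd t.+1.
  move=> t; rewrite /Dd; have := sle t; have := s_le_succ (Q + t) hb; rewrite !addnS; lia.
have Dmono : forall t t', t <= t' -> Dd t <= Dd t'.
  move=> t t' /subnKC <-; elim: (t' - t) => [|k IH]; first by rewrite addn0.
  by rewrite addnS; apply: leq_trans IH (Dinc _).
have phiS : forall x, phi x.+1 = phi x + Dd x by move=> x; rewrite /phi big_ord_recr.
have tang : forall x u, phi u + x * Dd u <= phi x + u * Dd u.
  move=> x u; case: (leqP u x) => h.
    rewrite -(subnKC h); elim: (x - u) => [|k IH]; first by rewrite addn0.
    rewrite addnS phiS; have := Dmono u (u + k) (leq_addr _ _); lia.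
  have : forall j, j <= u - x -> phi (x + j) <= phi x + j * Dd u.
    elim=> [|j IH] hj; first by rewrite addn0 mul0n addn0.
    rewrite addnS phiS; have := Dmono (x + j) u ltac:(lia); have := IH (ltnW hj); lia.
  move/(_ (u - x) (leqnn _)); rewrite subnKC; last exact: ltnW.
  have : x * Dd u + (u - x) * Dd u = u * Dd u by rewrite -mulnDl subnKC // ltnW.
  lia.
set D := tot ds.
set u := D %/ b; set v := D %% b.
have hD : D = u * b + v by rewrite /u /v -divn_eq.
have hv : v < b by rewrite /v ltn_mod; lia.
have hdelta : \sum_(e < b) \sum_(x <- ds) (e < x) = D.
  rewrite exchange_big /D /tot; apply: eq_big_seq => x hx.
  rewrite sum_lt_ord; apply/minn_idPl; apply: ltnW; by move/allP: ha => /(_ x hx).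
have hR := @lemR (b + b) b b ds (leqnn _) hs.
have ha' : all (fun x => x <= b) ds by apply: sub_all ha => x /ltnW.
move: (hR ha'); rewrite maxnn /g -/u -/v => hR'.
have hsum : \sum_(e < b) S_b b (Q + \sum_(x <- ds) (e < x))
           + \sum_(e < b) phi (\sum_(x <- ds) (e < x))
           = b * S_b b Q + D * a + rowsum b ds.
  rewrite -big_split /= (eq_bigr (fun e : 'I_b => S_b b Q + (\sum_(x <- ds) (e < x)) * a
                 + 'C(\sum_(x <- ds) (e < x), 2))); last by move=> e _; rewrite F1.
  rewrite !big_split /= -big_distrl /= hdelta sum_nat_const card_ord /rowsum.
  by rewrite mulnC.
have htan : b * phi u + D * Dd u <= \sum_(e < b) phi (\sum_(x <- ds) (e < x)) + b * u * Dd u.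
  have : \sum_(e < b) (phi u + (\sum_(x <- ds) (e < x)) * Dd u)
         <= \sum_(e < b) (phi (\sum_(x <- ds) (e < x)) + u * Dd u).
    by apply: leq_sum => e _; apply: tang.
  rewrite !big_split /= -big_distrl /= hdelta !sum_nat_const card_ord.
  by rewrite -!mulnA.
have hSR : S_b b (Q * b + D) = b * S_b b (Q + u) + (Q + u) * 'C(b, 2) + v * s_b b (Q + u) + 'C(v, 2).
  by rewrite hD addnA -mulnDl SR //; apply: ltnW.
have hFu := F1 u.
have hsu : s_b b (Q + u) + Dd u = a + u by have := sle u; rewrite /Dd; lia.
have e1 : b * (S_b b (Q + u) + phi u) = b * (S_b b Q + u * a + 'C(u, 2)) by rewrite hFu.
have e2 : v * (s_b b (Q + u) + Dd u) = v * (a + u) by rewrite hsu.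
have e3 : D * a = u * b * a + v * a by rewrite hD mulnDl.
have e4 : D * Dd u = u * b * Dd u + v * Dd u by rewrite hD mulnDl.
rewrite hSR; nia.
Qed.

Lemma sz_ie r : size (index_enum 'I_r) = r.
Proof. by rewrite /index_enum unlock -enumT size_enum_ord. Qed.

Lemma B01 r (n : 'I_r -> nat) : (forall i j : 'I_r, i <= j -> n i <= n j) ->
  (forall i, n i <= 1) -> \sum_(i < r) (r - i.+1) * n i <= 'C(\sum_(i < r) n i, 2).
Proof.
elim: r n => [|r IH] n hm h1; first by rewrite !big_ord0.
rewrite !big_ord_recr /= subnn mul0n addn0.
set n' := fun i : 'I_r => n (widen_ord (leqnSn r) i).
have hm' : forall i j : 'I_r, i <= j -> n' i <= n' j by move=> i j hij; apply: hm.
have := IH n' hm' (fun i => h1 _).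
rewrite (eq_bigr (fun i : 'I_r => (r - i.+1) * n' i + n' i)); last first.
  by move=> i _; rewrite /n' /= -mulSnr; congr (_ * _); have := ltn_ord i; lia.
rewrite big_split /= -/n'.
have := h1 ord_max.
case E: (n ord_max) => [|[|//]] _ hIH.
  have z : forall i, n' i = 0.
    move=> i; have := hm (widen_ord (leqnSn r) i) ord_max (ltnW (ltn_ord i)).
    by rewrite E leqn0 => /eqP.
  have s1 : \sum_(i < r) (r - i.+1) * n' i = 0 by rewrite big1 // => i _; rewrite z muln0.
  have s2 : \sum_(i < r) n' i = 0 by rewrite big1.
  by rewrite s1 s2.
rewrite (_ : \sum_(i < r) n (widen_ord (leqnSn r) i) + 1 = (\sum_(i < r) n' i).+1); last by rewrite addn1.
by rewrite C2S leq_add2r.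
Qed.

Lemma col_le b n e : 0 < b -> n %/ b + (e < n %% b) <= n.
Proof.
move=> hb; rewrite {3}(divn_eq n b); move: (n %/ b) (n %% b) => q d.
case: ltnP => h /=; nia.
Qed.

Lemma col_lt b n e : 1 < b -> 1 < n -> n %/ b + (e < n %% b) < n.
Proof.
move=> hb hn; have := divn_eq n b; have := ltn_mod n b; rewrite (_ : 0 < b) ?(ltnW hb) //.
move: (n %/ b) (n %% b) => q d hd hE; subst n.
case: ltnP => h /=; nia.
Qed.

Lemma col_mono b n n' e : 0 < b -> n <= n' -> n %/ b + (e < n %% b) <= n' %/ b + (e < n' %% b).
Proof.
move=> hb hnn.
have := divn_eq n b; have := ltn_mod n b; have := divn_eq n' b; have := ltn_mod n' b.
rewrite hb; move: (n %/ b) (n %% b) (n' %/ b) (n' %% b) => q d q' d' hd' hE' hd hE.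
subst n n'.
have hq : q <= q' by nia.
case: (ltnP q q') => h.
  case: (e < d); case: (e < d') => /=; lia.
have eq : q = q' by lia.
subst q'.
have hdd : d <= d' by lia.
case: ltnP => h1; case: ltnP => h2 /=; lia.
Qed.

Lemma col_sum b n : 0 < b -> \sum_(e < b) (n %/ b + (e < n %% b)) = n.
Proof.
move=> hb; rewrite big_split /= sum_nat_const card_ord sum_lt_ord.
rewrite (_ : minn (n %% b) b = n %% b); last by apply/minn_idPl/ltnW; rewrite ltn_mod.
by rewrite {3}(divn_eq n b) mulnC.
Qed.

Lemma col_S b n : 1 < b ->
  S_b b n = \sum_(e < b) S_b b (n %/ b + (e < n %% b)) + n %/ b * 'C(b, 2) + 'C(n %% b, 2).
Proof.
move=> hb.
rewrite (eq_bigr (fun e : 'I_b => S_b b (n %/ b) + (e < n %% b) * s_b b (n %/ b))); last first.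
  by move=> e _; case: (_ < _); rewrite ?addn0 ?addn1 ?S_succ /=; lia.
rewrite big_split /= sum_nat_const card_ord -big_distrl /= sum_lt_ord.
have hd : n %% b < b by rewrite ltn_mod; lia.
rewrite (_ : minn (n %% b) b = n %% b); last by apply/minn_idPl/ltnW.
rewrite {1}(divn_eq n b) SR //; last exact: ltnW.
lia.
Qed.

Lemma arith4 a w bb x y : a + w <= bb -> a + x + y + w <= bb + x + y.
Proof. lia. Qed.

Lemma main b N : 1 < b -> forall r (n : 'I_r -> nat), r <= b ->
  (forall i j : 'I_r, i <= j -> n i <= n j) -> \sum_(i < r) n i = N ->
  \sum_(i < r) S_b b (n i) + \sum_(i < r) (r - i.+1) * n i <= S_b b N.
Proof.
move=> hb; elim/ltn_ind: N => N IH r n hr hm hN.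
have hb0 : 0 < b by lia.
case: (boolP [forall i, n i <= 1]) => hall.
  have h1 : forall i, n i <= 1 by move=> i; exact: (forallP hall i).
  have -> : \sum_(i < r) S_b b (n i) = 0.
    rewrite big1 // => i _; have := h1 i; case: (n i) => [|[|//]] _; first exact: S0.
    by rewrite S_succ S0 s0.
  have hNr : N <= r.
    rewrite -hN; have : \sum_(i < r) n i <= \sum_(i < r) 1 by apply: leq_sum => i _; apply: h1.
    by rewrite sum_nat_const card_ord muln1.
  have := B01 hm h1; rewrite hN.
  have := SR 0 hb (leq_trans hNr hr); rewrite mul0n add0n S0 s0 => ->.
  lia.
rewrite negb_forall in hall; case/existsP: hall => i0; rewrite -ltnNge => hi0.
pose col (e : nat) (i : 'I_r) := n i %/ b + (e < n i %% b).
have IHe : forall e : 'I_b, \sum_(i < r) S_b b (col e i) + \sum_(i < r) (r - i.+1) * col e i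
                           <= S_b b (\sum_(i < r) col e i).
  move=> e; apply: (IH _ _ r (col e)) => //.
    rewrite -hN (bigD1 i0) //= [X in _ < X](bigD1 i0) //=.
    have := @col_lt b (n i0) e hb hi0.
    have : \sum_(i < r | i != i0) col e i <= \sum_(i < r | i != i0) n i.
      by apply: leq_sum => i _; apply: col_le.
    by move=> h1 h2; rewrite -addSn leq_add.
  by move=> i j hij; apply: col_mono => //; apply: hm.
have hsum : \sum_(e < b) (\sum_(i < r) S_b b (col e i) + \sum_(i < r) (r - i.+1) * col e i)
            <= \sum_(e < b) S_b b (\sum_(i < r) col e i).
  by apply: leq_sum => e _; apply: IHe.
rewrite big_split /= in hsum.
set ds := map (fun i => n i %% b) (index_enum 'I_r).
set Q := \sum_(i < r) n i %/ b.
have hcol : forall e : 'I_b, \sum_(i < r) col e i = Q + \sum_(x <- ds) (e < x).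
  by move=> e; rewrite big_split /= /ds big_map.
have hNB := @NB b Q ds hb.
have hsz : size ds <= b by rewrite /ds size_map sz_ie.
have hall : all (fun x => x < b) ds.
  by rewrite /ds all_map; apply/allP => i _ /=; rewrite ltn_mod.
have {}hNB := hNB hsz hall.
have hS : \sum_(i < r) S_b b (n i) = \sum_(e < b) \sum_(i < r) S_b b (col e i) + Q * 'C(b, 2) + colsum ds.
  rewrite (eq_bigr (fun i => \sum_(e < b) S_b b (col e i) + n i %/ b * 'C(b, 2) + 'C(n i %% b, 2))); last first.
    by move=> i _; rewrite col_S.
  rewrite !big_split /= exchange_big -big_distrl /= /colsum /ds big_map //.
have hW : \sum_(i < r) (r - i.+1) * n i = \sum_(e < b) \sum_(i < r) (r - i.+1) * col e i.
  rewrite exchange_big /=; apply: eq_bigr => i _.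
  by rewrite -big_distrr /= col_sum.
have hNe : N = Q * b + tot ds.
  rewrite -hN /tot /ds big_map /Q big_distrl -big_split /=.
  by apply: eq_bigr => i _; rewrite -divn_eq.
rewrite hS hW hNe.
rewrite [X in _ <= X](eq_bigr (fun e : 'I_b => S_b b (Q + \sum_(x <- ds) (e < x)))) in hsum; last first.
  by move=> e _; rewrite hcol.
apply: leq_trans hNB.
exact: arith4 hsum.
Qed.

Theorem theorem5 (b r : nat) (n : 'I_r -> nat) :
  2 <= b -> 1 <= r <= b ->
  (forall i j : 'I_r, i <= j -> n i <= n j) ->
  \sum_(i < r) S_b b (n i) + \sum_(i < r) (r - i.+1) * n i
    <= S_b b (\sum_(i < r) n i).
Proof.
move=> hb /andP [_ hr] hm.
exact: (@main b (\sum_(i < r) n i) hb r n hr hm erefl).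
Qed.
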